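(* Let $G$ be a graph, $C\subseteq V(G)$, $\mathcal{B}=\{N_G[v]: v\in C\}$, and $k$ a positive integer. Let $X\subseteq V(G)$ and let $A=\{A_1,\ldots,A_\ell\}$ be a subset of the connected components of $G-X$ with $\max_{i\in[\ell]}|V(A_i)|=t$. If $\ell>(|X|+t)\cdot 2^{(|X|+t)^2}\cdot 2^{2t+|X|+1}$, then there exists $i\in[\ell]$ such that, with $G'=G-V(A_i)$ and $\mathcal{B}'=\{N_{G'}[v]: v\in C\setminus V(A_i)\}$, we have NCTD$^+(\mathcal{B})\le k$ if and only if NCTD$^+(\mathcal{B}')\le k$ (in $G'$).
   Context: $N_G[v]$ is the closed neighborhood of $v$ in $G$. A positive teaching map for a set $\mathcal{B}$ of closed neighborhoods assigns to each $B\in\mathcal{B}$ a set $T(B)\subseteq B$. A vertex $w$ distinguishes $B,B'$ if $w$ lies in exactly one of $B,B'$. $T$ is non-clashing if for all distinct $B,B'\in\mathcal{B}$ some $w\in T(B)\cup T(B')$ distinguishes $B$ and $B'$; its size is $\max_{B\in\mathcal{B}}|T(B)|$. NCTD$^+(\mathcal{B})$ is the minimum size of a positive non-clashing teaching map for $\mathcal{B}$. $[\ell]=\{1,\ldots,\ell\}$. *)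

(* Defs.v *)
From mathcomp Require Import all_boot.
Set Implicit Arguments. Unset Strict Implicit. Unset Printing Implicit Defensive.

Definition simple_graph (V : finType) (e : rel V) : Prop :=
  symmetric e /\ irreflexive e.

Definition cnbhd (V : finType) (e : rel V) (v : V) : {set V} :=
  [set u | (u == v) || e v u].

Definition distinguishes (V : finType) (w : V) (B B' : {set V}) : bool :=
  (w \in B) != (w \in B').

(* NCTD^+(F) <= k : there is a positive non-clashing teaching map of size <= k. *)
Definition nctdp_le (V : finType) (F : {set {set V}}) (k : nat) : Prop :=
  exists T : {set V} -> {set V},
    (forall B, B \in F -> T B \subset B /\ #|T B| <= k) /\
    (forall B B', B \in F -> B' \in F -> B != B' ->
       exists2 w, w \in T B :|: T B' & distinguishes w B B').

Definition induced_rel (V : finType) (e : rel V) (S : {set V}) : rel V :=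
  [rel x y | [&& e x y, x \in S & y \in S]].

Definition is_component (V : finType) (e : rel V) (X S : {set V}) : Prop :=
  [/\ S != set0,
      [disjoint S & X],
      (forall x y, x \in S -> y \in S -> connect (induced_rel e S) x y)
    & (forall x y, x \in S -> y \notin X -> e x y -> y \in S)].

(* Main.v *)
Require Import Defs.
From mathcomp Require Import all_boot zify.
From Stdlib Require Import Classical.
Set Implicit Arguments. Unset Strict Implicit. Unset Printing Implicit Defensive.

Section Basics.
Variables (V : finType) (e : rel V) (C X : {set V}).
Hypothesis esym : symmetric e.
Local Notation N := (cnbhd e).

Lemma inN u d : (d \in N u) = (d == u) || e u d.
Proof. by rewrite /cnbhd inE. Qed.

Lemma comp_sub S1 S2 z : is_component e X S1 -> is_component e X S2 ->
  z \in S1 -> z \in S2 -> S1 \subset S2.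
Proof.
move=> [_ d1 c1 _] [_ _ _ cl2] z1 z2; apply/subsetP => y y1.
have /connectP [p pth ->] := c1 _ _ z1 y1.
elim: p z z1 z2 pth => //= a p IH z z1 z2 /andP [za pth].
move: za; rewrite /induced_rel /= => /and3P [eza _ a1].
apply: (IH a a1 _ pth); apply: (cl2 z a z2 _ eza).
by rewrite (disjointFr d1 a1).
Qed.

Lemma comp_eq S1 S2 z : is_component e X S1 -> is_component e X S2 ->
  z \in S1 -> z \in S2 -> S1 = S2.
Proof.
move=> c1 c2 z1 z2; apply/eqP; rewrite eqEsubset.
by rewrite (comp_sub c1 c2 z1 z2) (comp_sub c2 c1 z2 z1).
Qed.

Lemma compX S d : is_component e X S -> d \in S -> d \notin X.
Proof. by move=> [_ dj _ _] dS; rewrite (disjointFr dj dS). Qed.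

Lemma comp_nb S u d : is_component e X S -> u \in S -> d \in N u -> d \notin X -> d \in S.
Proof.
move=> [_ _ _ cl] uS; rewrite inN => /orP [/eqP -> //|eud] dX.
exact: cl _ _ uS dX eud.
Qed.

Lemma comp_out S w d : is_component e X S -> w \notin S -> w \notin X -> d \in S -> d \notin N w.
Proof.
move=> [_ _ _ cl] wS wX dS; rewrite inN; apply/negP => /orP [/eqP E|ewd].
  by move: dS; rewrite E (negPf wS).
by move: wS; rewrite (cl _ _ dS wX _) // esym.
Qed.

Definition isoP (Sa Sb : {set V}) (f g : V -> V) :=
  [/\ {in Sa, forall s, f s \in Sb}, {in Sa, forall s, g (f s) = s},
     {in Sa &, forall s s', e (f s) (f s') = e s s'},
     {in X, forall x, {in Sa, forall s, e x (f s) = e x s}} &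
     {in Sa, forall s, (f s \in C) = (s \in C)}].

Definition ext (f : V -> V) (Sa : {set V}) d := if d \in Sa then f d else d.

Lemma transfer Sa Sb f g u d : is_component e X Sa -> is_component e X Sb ->
  isoP Sa Sb f g -> u \in Sa -> (d \in Sa) || (d \in X) ->
  (ext f Sa d \in N (f u)) = (d \in N u).
Proof.
move=> ca cb [fS gf fe fX fC] uS dd; rewrite /ext !inN.
case: ifP => dS.
  rewrite fe //; congr (_ || _); apply/eqP/eqP => [E|->//].
  by rewrite -(gf d dS) E gf.
rewrite dS /= in dd.
have -> : (d == f u) = false.
  by apply/negbTE; apply/eqP => E; move: (compX cb (fS u uS)); rewrite -E dd.
have -> : (d == u) = false.
  by apply/negbTE; apply/eqP => E; move: dS; rewrite E uS.
by rewrite /= esym fX // esym.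
Qed.

Lemma transferX Sa Sb f g x d : is_component e X Sa -> is_component e X Sb ->
  isoP Sa Sb f g -> x \in X -> d \in Sa -> (f d \in N x) = (d \in N x).
Proof.
move=> ca cb [fS gf fe fX fC] xX dS; rewrite !inN fX //.
have -> : (f d == x) = false.
  by apply/negbTE; apply/eqP => E; move: (compX cb (fS d dS)); rewrite E xX.
have -> : (d == x) = false.
  by apply/negbTE; apply/eqP => E; move: (compX ca dS); rewrite E xX.
by [].
Qed.

End Basics.

Section Copies.
Variables (V : finType) (e : rel V) (C X : {set V}).
Hypothesis esym : symmetric e.
Local Notation N := (cnbhd e).
Variables (K : {set {set V}}) (phi : {set V} -> {set V} -> V -> V).
Hypothesis Kcomp : {in K, forall S, is_component e X S}.
Hypothesis Kiso : {in K &, forall Sa Sb, isoP e C X Sa Sb (phi Sa Sb) (phi Sb Sa)}.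
Hypothesis Kbig : 2 ^ #|X| + 2 <= #|K|.

Lemma K3 : 3 <= #|K|.
Proof. by apply: leq_trans Kbig; rewrite -[3]/(1 + 2) leq_add2r expn_gt0. Qed.

Lemma Kdisj Sa Sb d : Sa \in K -> Sb \in K -> Sa != Sb -> d \in Sa -> d \notin Sb.
Proof.
move=> aK bK ab da; apply/negP => db.
by move: ab; rewrite (comp_eq (Kcomp aK) (Kcomp bK) da db) eqxx.
Qed.

Lemma Kother (P Q : {set V}) : exists2 S', S' \in K & (S' != P) && (S' != Q).
Proof.
have : 0 < #|K :\: [set P; Q]|.
  rewrite cardsD; have h1 : #|K :&: [set P; Q]| <= 2.
    have := subset_leq_card (subsetIr K [set P; Q]); rewrite cards2 => h.
    by apply: (leq_trans h); case: (P != Q).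
  by rewrite subn_gt0; exact: leq_ltn_trans h1 K3.
rewrite card_gt0 => /set0Pn [S' ]; rewrite !inE negb_or => /andP [/andP [h1 h2] h3].
by exists S'; rewrite ?h1 ?h2.
Qed.

Lemma Kavoid (P : {set V}) u : exists2 S', S' \in K & (S' != P) && (u \notin S').
Proof.
case: (pickP [pred S' | (S' \in K) && (u \in S')]) => [Q /andP [QK uQ]|none].
  have [S' S'K /andP [h1 h2]] := Kother P Q; exists S' => //; rewrite h1 /=.
  by apply: (Kdisj QK S'K _ uQ); rewrite eq_sym.
have [S' S'K /andP [h1 h2]] := Kother P P; exists S' => //; rewrite h1 /=.
by apply/negP => uS; move: (none S'); rewrite /= S'K uS.
Qed.

Lemma inj_trunc_half S u1 u2 d : S \in K -> u1 \notin S -> u2 \notin S ->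
  N u1 :\: S = N u2 :\: S -> d \in S -> d \in N u1 -> d \in N u2.
Proof.
move=> SK u1S u2S E dS du1.
have u1X : u1 \in X.
  by apply/negPn/negP => u1X; move: du1; rewrite (negPf (comp_out esym (Kcomp SK) u1S u1X dS)).
apply/negPn/negP => du2.
have [Sk SkK /andP [SkS u2Sk]] := Kavoid S u2.
have [fS _ _ _ _] := Kiso SK SkK.
have d'Sk := fS d dS.
have d'N1 : phi S Sk d \in N u1 by rewrite (transferX (Kcomp SK) (Kcomp SkK) (Kiso SK SkK) u1X dS).
have d'S : phi S Sk d \notin S by apply: Kdisj SkK SK SkS d'Sk.
have : phi S Sk d \in N u2 :\: S by rewrite -E inE d'S.
rewrite inE => /andP [_ d'N2].
case u2X : (u2 \in X).
  by move: d'N2; rewrite (transferX (Kcomp SK) (Kcomp SkK) (Kiso SK SkK) u2X dS) (negPf du2).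
by move: d'N2; rewrite (negPf (comp_out esym (Kcomp SkK) u2Sk (negbT u2X) d'Sk)).
Qed.

Lemma inj_trunc S u1 u2 : S \in K -> u1 \notin S -> u2 \notin S ->
  N u1 != N u2 -> N u1 :\: S != N u2 :\: S.
Proof.
move=> SK u1S u2S; apply: contra => /eqP E; apply/eqP/setP => d.
case dS : (d \in S).
  apply/idP/idP; first exact: inj_trunc_half dS.
  by apply: inj_trunc_half dS => //; rewrite E.
by move/setP: E => /(_ d); rewrite !inE dS.
Qed.

End Copies.

Lemma dist_trunc (V : finType) (S A B : {set V}) w : w \notin S ->
  distinguishes w (A :\: S) (B :\: S) = distinguishes w A B.
Proof. by move=> wS; rewrite /distinguishes !inE (negPf wS). Qed.

Section DirA.
Variables (V : finType) (e : rel V) (C X : {set V}).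
Hypothesis esym : symmetric e.
Local Notation N := (cnbhd e).
Variables (K : {set {set V}}) (phi : {set V} -> {set V} -> V -> V).
Hypothesis Kcomp : {in K, forall S, is_component e X S}.
Hypothesis Kiso : {in K &, forall Sa Sb, isoP e C X Sa Sb (phi Sa Sb) (phi Sb Sa)}.
Hypothesis Kbig : 2 ^ #|X| + 2 <= #|K|.

Variables (S Sj : {set V}) (k : nat) (T' : {set V} -> {set V}).
Hypotheses (SK : S \in K) (SjK : Sj \in K) (SjS : Sj != S).
Local Notation BB := [set N v | v in C].
Local Notation BS := [set N v :\: S | v in C :\: S].
Hypothesis T'sub : forall Y, Y \in BS -> T' Y \subset Y /\ #|T' Y| <= k.
Hypothesis T'ncl : forall Y1 Y2, Y1 \in BS -> Y2 \in BS -> Y1 != Y2 ->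
       exists2 w, w \in T' Y1 :|: T' Y2 & distinguishes w Y1 Y2.
Hypothesis good : {in Sj, forall v, v \in C -> ~~ (T' (N v :\: S) \subset X)}.

Local Notation f := (phi S Sj).
Local Notation g := (phi Sj S).

Definition TAu u := if u \in S then [set ext g Sj d | d in T' (N (f u) :\: S)]
                    else T' (N u :\: S).
Definition TA Y := if [pick v in C | N v == Y] is Some u then TAu u else set0.

Lemma TA_spec Y : Y \in BB -> exists u, [/\ u \in C, N u = Y & TA Y = TAu u].
Proof.
move=> /imsetP [v vC ->]; rewrite /TA; case: pickP => [u /andP [uC /eqP E]|none].
  by exists u.
by move: (none v); rewrite /= vC eqxx.
Qed.

Let cS := Kcomp SK.
Let cSj := Kcomp SjK.
Let isf := Kiso SK SjK.
Let isg := Kiso SjK SK.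

Lemma f_Sj u : u \in S -> f u \in Sj.
Proof. by case: isf => h _ _ _ _ /h. Qed.
Lemma gf u : u \in S -> g (f u) = u.
Proof. by case: isf => _ h _ _ _ /h. Qed.
Lemma f_C u : u \in S -> (f u \in C) = (u \in C).
Proof. by case: isf => _ _ _ _ h /h. Qed.
Lemma g_S d : d \in Sj -> g d \in S.
Proof. by case: isg => h _ _ _ _ /h. Qed.
Lemma Sj_notS d : d \in Sj -> d \notin S.
Proof. move=> dSj; exact: (Kdisj Kcomp SjK SK SjS dSj). Qed.
Lemma f_notS u : u \in S -> f u \notin S.
Proof. by move=> uS; apply: Sj_notS; apply: f_Sj. Qed.

Lemma fuB u : u \in S -> u \in C -> N (f u) :\: S \in BS.
Proof. by move=> uS uC; apply: imset_f; rewrite inE f_notS // f_C. Qed.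

Lemma T'f_prop u d : u \in S -> u \in C -> d \in T' (N (f u) :\: S) ->
  [/\ d \in N (f u), d \notin S & (d \in Sj) || (d \in X)].
Proof.
move=> uS uC dT; have [sub _] := T'sub (fuB uS uC).
move: (subsetP sub d dT); rewrite in_setD => /andP [dS dN]; split => //.
by case dX : (d \in X); rewrite ?orbT // (comp_nb cSj (f_Sj uS) dN) ?dX.
Qed.

Lemma transg u d : u \in S -> (d \in Sj) || (d \in X) ->
  (ext g Sj d \in N u) = (d \in N (f u)).
Proof.
by move=> uS dd; rewrite -{1}(gf uS) (transfer esym cSj cS isg (f_Sj uS) dd).
Qed.

Lemma TA_sub Y : Y \in BB -> TA Y \subset Y /\ #|TA Y| <= k.
Proof.
move=> /TA_spec [u [uC <- ->]]; rewrite /TAu; case: ifP => uS.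
  have [sub ck] := T'sub (fuB uS uC); split; last exact: leq_trans (leq_imset_card _ _) ck.
  apply/subsetP => _ /imsetP [d dT ->].
  have [dN _ dd] := T'f_prop uS uC dT; by rewrite transg.
have uB : N u :\: S \in BS by apply: imset_f; rewrite inE uS.
have [sub ck] := T'sub uB; split => //; apply: subset_trans sub _; exact: subsetDl.
Qed.

Lemma T'_notS Y d : Y \in BS -> d \in T' Y -> d \notin S.
Proof.
move=> YB dT; have [sub _] := T'sub YB; move: (subsetP sub d dT).
by case/imsetP: YB => v _ ->; rewrite in_setD => /andP [].
Qed.

Lemma mixed u1 u2 : u1 \in C -> u2 \in C -> u1 \in S -> u2 \notin S ->
  exists2 w, w \in TAu u1 :|: TAu u2 & distinguishes w (N u1) (N u2).
Proof.
move=> u1C u2C u1S u2S; rewrite /TAu u1S (negPf u2S).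
case u2X : (u2 \in X); last first.
  have hC : f u1 \in C by rewrite f_C.
  have /subsetPn [d dT dX] := good (f_Sj u1S) hC.
  have [dN _ dd] := T'f_prop u1S u1C dT.
  have dSj : d \in Sj by move: dd; rewrite (negPf dX) orbF.
  exists (ext g Sj d); first by rewrite in_setU imset_f.
  rewrite /distinguishes transg // dN; rewrite /ext dSj.
  by rewrite (negPf (comp_out esym cS u2S (negbT u2X) (g_S dSj))).
have B1 := fuB u1S u1C.
have B2 : N u2 :\: S \in BS by apply: imset_f; rewrite inE u2S.
have neq : N (f u1) :\: S != N u2 :\: S.
  case fN : (f u1 \in N u2).
    have [Sk SkK /andP [SkS SkSj]] := Kother Kbig S Sj.
    have isk := Kiso SjK SkK.
    have zSk : phi Sj Sk (f u1) \in Sk by case: isk => h _ _ _ _; apply: h; apply: f_Sj.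
    apply/negP => /eqP /setP /(_ (phi Sj Sk (f u1))).
    rewrite !in_setD (transferX cSj (Kcomp SkK) isk u2X (f_Sj u1S)) fN.
    rewrite (Kdisj Kcomp SkK SK SkS zSk) /= => zN.
    have := comp_nb cSj (f_Sj u1S) zN (compX (Kcomp SkK) zSk).
    by move/(Kdisj Kcomp SjK SkK); rewrite eq_sym SkSj zSk => /(_ isT).
  apply/negP => /eqP /setP /(_ (f u1)); rewrite !in_setD fN (f_notS u1S) /=.
  by rewrite inN eqxx.
have [w wT wd] := T'ncl B1 B2 neq.
have wS : w \notin S by move: wT; rewrite in_setU => /orP [] /(T'_notS); [apply|apply].
rewrite dist_trunc // in wd.
move: wT; rewrite in_setU => /orP [wT|wT].
  have [wN _ dd] := T'f_prop u1S u1C wT.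
  exists (ext g Sj w); first by rewrite in_setU imset_f.
  rewrite /distinguishes transg //.
  suff -> : (ext g Sj w \in N u2) = (w \in N u2) by [].
  rewrite /ext; case: ifP => // wSj.
  by rewrite (transferX cSj cS isg u2X wSj).
exists w; first by rewrite in_setU wT orbT.
have [sub _] := T'sub B2.
have wN2 : w \in N u2 by move: (subsetP sub w wT); rewrite in_setD => /andP [].
have wN1 : (w \in N (f u1)) = false.
  by move: wd; rewrite /distinguishes wN2; case: (w \in N (f u1)).
apply/negP => /eqP wu1'; have wu1 : w \in N u1 by rewrite wu1' wN2.
case wX : (w \in X).
  have := transfer esym cS cSj isf u1S (d:=w); rewrite wX orbT => /(_ isT).
  by rewrite /ext (negPf wS) wu1 wN1.
by move: wS; rewrite (comp_nb cS u1S wu1 (negbT wX)).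
Qed.

Lemma dirA_main : nctdp_le BB k.
Proof.
exists TA; split; first exact: TA_sub.
move=> Y1 Y2 Y1B Y2B.
have [u1 [u1C E1 ->]] := TA_spec Y1B; have [u2 [u2C E2 ->]] := TA_spec Y2B.
rewrite -E1 -E2 => neq.
case u1S: (u1 \in S); case u2S: (u2 \in S).
- have neq' : N (f u1) :\: S != N (f u2) :\: S.
    apply: contra neq => /eqP E; apply/eqP/setP => d.
    case dd: ((d \in S) || (d \in X)).
      rewrite -(transfer esym cS cSj isf u1S dd) -(transfer esym cS cSj isf u2S dd).
      have hn : ext f S d \notin S.
        rewrite /ext; case: ifP => dS; first by apply: f_notS.
        by rewrite dS.
      by move/setP: E => /(_ (ext f S d)); rewrite !in_setD (negPf hn).
    move/negbT: dd; rewrite negb_or => /andP [dS dX].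
    have h u : u \in S -> d \in N u = false.
      move=> uS; apply/negbTE/negP => dN.
      by move: dS; rewrite (comp_nb cS uS dN dX).
    by rewrite !h.
  have [w wT wd] := T'ncl (fuB u1S u1C) (fuB u2S u2C) neq'.
  have [wS dd] : w \notin S /\ ((w \in Sj) || (w \in X)).
    move: wT; rewrite in_setU => /orP [] wT.
      by have [_ ? ?] := T'f_prop u1S u1C wT.
    by have [_ ? ?] := T'f_prop u2S u2C wT.
  exists (ext g Sj w).
    rewrite /TAu u1S u2S in_setU.
    by move: wT; rewrite in_setU => /orP [] wT; apply/orP; [left|right]; apply: imset_f.
  by rewrite /distinguishes !transg // -/(distinguishes w _ _) -(dist_trunc _ _ wS).
- exact: mixed u1C u2C u1S (negbT u2S).
- have [w wT wd] := mixed u2C u1C u2S (negbT u1S).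
  by exists w; rewrite 1?setUC // /distinguishes eq_sym.
- have B1 : N u1 :\: S \in BS by apply: imset_f; rewrite in_setD u1S.
  have B2 : N u2 :\: S \in BS by apply: imset_f; rewrite in_setD u2S.
  have neq' := inj_trunc esym Kcomp Kiso Kbig SK (negbT u1S) (negbT u2S) neq.
  have [w wT wd] := T'ncl B1 B2 neq'.
  have wS : w \notin S by move: wT; rewrite in_setU => /orP [] /(T'_notS); [apply|apply].
  exists w; first by rewrite /TAu u1S u2S.
  by rewrite -(dist_trunc _ _ wS).
Qed.

End DirA.

Section DirA2.
Variables (V : finType) (e : rel V) (C X : {set V}).
Hypothesis esym : symmetric e.
Local Notation N := (cnbhd e).
Variables (K : {set {set V}}) (phi : {set V} -> {set V} -> V -> V).
Hypothesis Kcomp : {in K, forall S, is_component e X S}.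
Hypothesis Kiso : {in K &, forall Sa Sb, isoP e C X Sa Sb (phi Sa Sb) (phi Sb Sa)}.
Hypothesis Kbig : 2 ^ #|X| + 2 <= #|K|.
Local Notation BB := [set N v | v in C].

Lemma dirA S k : S \in K -> nctdp_le [set N v :\: S | v in C :\: S] k -> nctdp_le BB k.
Proof.
move=> SK [T' [T'sub T'ncl]].
pose P (S' : {set V}) v := (v \in S') && (v \in C) && (T' (N v :\: S) \subset X).
pose H := [set S' in K | (S' != S) && [exists v, P S' v]].
pose gH S' := if [pick v | P S' v] is Some v then N v :&: X else set0.
have Hspec S' : S' \in H -> exists v, [/\ P S' v, S' \in K, S' != S & gH S' = N v :&: X].
  rewrite inE => /andP [S'K /andP [S'S /existsP [v0 Pv0]]].
  rewrite /gH; case: pickP => [v Pv|none]; first by exists v.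
  by move: (none v0); rewrite Pv0.
have ginj : {in H &, injective gH}.
  move=> S1 S2 /Hspec [v1 [/andP [/andP [v1S1 v1C] v1T] S1K S1S g1]].
  move=> /Hspec [v2 [/andP [/andP [v2S2 v2C] v2T] S2K S2S g2]] E.
  apply/eqP/negPn/negP => S12.
  have v1S : v1 \notin S by apply: (Kdisj Kcomp S1K SK S1S v1S1).
  have v2S : v2 \notin S by apply: (Kdisj Kcomp S2K SK S2S v2S2).
  have B1 : N v1 :\: S \in [set N v :\: S | v in C :\: S] by apply: imset_f; rewrite in_setD v1S.
  have B2 : N v2 :\: S \in [set N v :\: S | v in C :\: S] by apply: imset_f; rewrite in_setD v2S.
  have neq : N v1 :\: S != N v2 :\: S.
    apply/negP => /eqP /setP /(_ v1); rewrite !in_setD v1S inN eqxx /= => h.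
    have : v1 \in S2 by apply: (comp_nb (Kcomp S2K) v2S2); rewrite -?h ?(compX (Kcomp S1K) v1S1).
    by rewrite (negPf (Kdisj Kcomp S1K S2K S12 v1S1)).
  have [w wT] := T'ncl _ _ B1 B2 neq.
  have wX : w \in X by move: wT; rewrite in_setU => /orP [] wT; [apply: (subsetP v1T)|apply: (subsetP v2T)].
  have wS : w \notin S by apply/negP => /(compX (Kcomp SK)); rewrite wX.
  rewrite dist_trunc // /distinguishes.
  have := congr1 (fun A : {set V} => w \in A) E; rewrite /= g1 g2 !in_setI wX !andbT => ->.
  by rewrite eqxx.
have cardH : #|H| <= 2 ^ #|X|.
  rewrite -(card_in_imset ginj) -card_powerset; apply: subset_leq_card.
  apply/subsetP => _ /imsetP [S' /Hspec [v [_ _ _ ->]] ->].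
  by rewrite inE subsetIr.
have /subsetPn [Sj] : ~~ (K :\ S \subset H).
  apply/negP => /subset_leq_card; apply/negP; rewrite -ltnNge.
  apply: (leq_ltn_trans cardH); have := Kbig; rewrite (cardsD1 S K) SK add1n => Kb.
  by rewrite -ltnS; apply: leq_trans Kb; rewrite addn2.
rewrite in_setD1 => /andP [SjS SjK] SjH.
apply: (dirA_main esym Kcomp Kiso Kbig SK SjK SjS T'sub T'ncl).
move=> v vSj vC; apply/negP => vT; move: SjH; rewrite inE SjK SjS /=.
by move/existsPn => /(_ v); rewrite /P vSj vC vT.
Qed.

End DirA2.

Section DirB.
Variables (V : finType) (e : rel V) (C X : {set V}).
Hypothesis esym : symmetric e.
Local Notation N := (cnbhd e).
Variables (K : {set {set V}}) (phi : {set V} -> {set V} -> V -> V).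
Hypothesis Kcomp : {in K, forall S, is_component e X S}.
Hypothesis Kiso : {in K &, forall Sa Sb, isoP e C X Sa Sb (phi Sa Sb) (phi Sb Sa)}.
Hypothesis Kbig : 2 ^ #|X| + 2 <= #|K|.
Local Notation BB := [set N v | v in C].

Variables (k : nat) (T : {set V} -> {set V}).
Hypothesis Tsub : forall Y, Y \in BB -> T Y \subset Y /\ #|T Y| <= k.
Hypothesis Tncl : forall Y1 Y2, Y1 \in BB -> Y2 \in BB -> Y1 != Y2 ->
       exists2 w, w \in T Y1 :|: T Y2 & distinguishes w Y1 Y2.

Definition hits x (S' : {set V}) := T (N x) :&: S' != set0.
Definition sole x S' := hits x S' && [forall S'' in K, (S'' != S') ==> ~~ hits x S''].

Lemma exists_S : exists2 S, S \in K & {in X, forall x, ~~ sole x S}.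
Proof.
pose SH := [set S' in K | [exists x in X, sole x S']].
pose gS S' := [pick x in X | sole x S'].
have Hspec S' : S' \in SH -> S' \in K /\ exists x, [/\ gS S' = Some x, x \in X & sole x S'].
  rewrite inE => /andP [S'K /existsP [x0 Px0]]; split => //.
  rewrite /gS; case: pickP => [x /andP [xX Px]|none]; first by exists x.
  by move: (none x0); rewrite Px0.
have ginj : {in SH &, injective gS}.
  move=> S1 S2 /Hspec [S1K [x1 [g1 _ /andP [_ /forall_inP s1]]]].
  move=> /Hspec [S2K [x2 [g2 _ /andP [h2 _]]]] E.
  move: E; rewrite g1 g2 => -[E]; subst x2.
  apply/eqP/negPn/negP => S12; have := s1 _ S2K; rewrite eq_sym S12 /=.
  by rewrite h2.
have cardSH : #|SH| <= #|X|.
  rewrite -(card_in_imset ginj); apply: leq_trans (leq_imset_card Some X).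
  apply: subset_leq_card.
  by apply/subsetP => _ /imsetP [S' /Hspec [_ [x [-> xX _]]] ->]; apply: imset_f.
have /subsetPn [S SK SSH] : ~~ (K \subset SH).
  apply/negP => /subset_leq_card; apply/negP; rewrite -ltnNge.
  apply: (leq_ltn_trans cardSH); apply: leq_trans Kbig.
  apply: leq_trans (ltn_expl _ (isT : 1 < 2)) _; exact: leq_addr.
exists S => // x xX; apply/negP => sx; move: SSH; rewrite inE SK /=.
by apply/negP/negPn/existsP; exists x; rewrite xX.
Qed.

Variable S : {set V}.
Hypotheses (SK : S \in K) (nsole : {in X, forall x, ~~ sole x S}).
Local Notation BS := [set N v :\: S | v in C :\: S].

Definition jx x := [pick S' in K | (S' != S) &&
   [exists S'' in K, [&& S'' != S, S'' != S' & hits x S'']]].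
Definition repl x := if jx x is Some Sj then [set ext (phi S Sj) S d | d in T (N x)]
                     else T (N x) :\: S.
Definition TBu u := if u \in X then repl u else T (N u).
Definition TB Y := if [pick u in C :\: S | N u :\: S == Y] is Some u then TBu u else set0.

Lemma TB_spec Y : Y \in BS -> exists u, [/\ u \in C, u \notin S, N u :\: S = Y & TB Y = TBu u].
Proof.
move=> /imsetP [v vC ->]; rewrite /TB; case: pickP => [u /andP [uC /eqP E]|none].
  by move: uC; rewrite in_setD => /andP [uS uC]; exists u.
by move: (none v); rewrite /= vC eqxx.
Qed.

Let cS := Kcomp SK.

Lemma jx_spec x w : x \in X -> w \in T (N x) -> w \in S ->
  exists Sj, [/\ jx x = Some Sj, Sj \in K, Sj != S &
      exists2 Si, Si \in K & [&& Si != S, Si != Sj & hits x Si]].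
Proof.
move=> xX wT wS.
have hS : hits x S by apply/set0Pn; exists w; rewrite in_setI wT wS.
have := nsole xX; rewrite /sole hS /= => /forall_inPn [Si SiK].
rewrite negb_imply negbK => /andP [SiS hSi].
rewrite /jx; case: pickP => [Sj /andP [SjK /andP [SjS /exists_inP [Si' Si'K h]]]|none].
  by exists Sj; split => //; exists Si'.
have [Sj SjK /andP [SjS SjSi]] := Kother Kbig S Si.
move: (none Sj); rewrite /= SjK SjS /= => /negbT /exists_inPn /(_ Si SiK).
by rewrite SiS hSi eq_sym SjSi.
Qed.

Lemma TB_sub Y : Y \in BS -> TB Y \subset Y /\ #|TB Y| <= k.
Proof.
move=> /TB_spec [u [uC uS <- ->]].
have [sub ck] := Tsub (imset_f N uC).
rewrite /TBu; case: ifP => uX; last first.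
  split => //; apply/subsetP => d dT; rewrite in_setD (subsetP sub d dT) andbT.
  by apply/negP => dS; move: (subsetP sub d dT); rewrite (negPf (comp_out esym cS uS (negbT uX) dS)).
rewrite /repl; case E: (jx u) => [Sj|].
  move: E; rewrite /jx; case: pickP => // Sj' /andP [SjK /andP [SjS _]] [<-].
  split; last exact: leq_trans (leq_imset_card _ _) ck.
  apply/subsetP => _ /imsetP [d dT ->]; rewrite /ext; case: ifP => dS.
    have [fS _ _ _ _] := Kiso SK SjK.
    rewrite in_setD (transferX cS (Kcomp SjK) (Kiso SK SjK) uX dS) (subsetP sub d dT) andbT.
    exact: (Kdisj Kcomp SjK SK SjS (fS d dS)).
  by rewrite in_setD dS (subsetP sub d dT).
split; first exact: setSD.
by apply: leq_trans ck; apply: subset_leq_card; apply: subsetDl.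
Qed.

Lemma oneside u1 u2 w : u1 \in C -> u2 \in C -> u1 \notin S -> u2 \notin S ->
  w \in T (N u1) -> distinguishes w (N u1) (N u2) ->
  exists2 w', w' \in TBu u1 :|: TBu u2 & distinguishes w' (N u1 :\: S) (N u2 :\: S).
Proof.
move=> u1C u2C u1S u2S wT wd.
have [sub1 _] := Tsub (imset_f N u1C).
have wN1 : w \in N u1 := subsetP sub1 w wT.
case wS : (w \in S); last first.
  exists w; last by rewrite dist_trunc ?wS.
  rewrite in_setU /TBu; apply/orP; left; case: ifP => // u1X.
  rewrite /repl; case: (jx u1) => [Sj|]; last by rewrite in_setD wS.
  by apply/imsetP; exists w => //; rewrite /ext wS.
have u1X : u1 \in X.
  by apply/negPn/negP => u1X; move: wN1; rewrite (negPf (comp_out esym cS u1S u1X wS)).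
have [Sj [E SjK SjS [Si SiK /and3P [SiS SiSj hSi]]]] := jx_spec u1X wT wS.
have isj := Kiso SK SjK.
have wN2 : w \notin N u2 by move: wd; rewrite /distinguishes wN1; case: (w \in N u2).
have fw : phi S Sj w \in Sj by case: isj => h _ _ _ _; apply: h.
have fwS : phi S Sj w \notin S by apply: (Kdisj Kcomp SjK SK SjS fw).
have fw1 : phi S Sj w \in N u1 by rewrite (transferX cS (Kcomp SjK) isj u1X wS).
have inT1 d : d \in T (N u1) -> ext (phi S Sj) S d \in TBu u1 :|: TBu u2.
  by move=> dT; rewrite in_setU /TBu u1X /repl E imset_f.
case u2X : (u2 \in X).
  exists (phi S Sj w); first by have := inT1 w wT; rewrite /ext wS.
  rewrite dist_trunc // /distinguishes fw1.
  by rewrite (transferX cS (Kcomp SjK) isj u2X wS) (negPf wN2).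
case u2Sj : (u2 \in Sj); last first.
  exists (phi S Sj w); first by have := inT1 w wT; rewrite /ext wS.
  rewrite dist_trunc // /distinguishes fw1.
  by rewrite (negPf (comp_out esym (Kcomp SjK) (negbT u2Sj) (negbT u2X) fw)).
have /set0Pn [z] := hSi; rewrite in_setI => /andP [zT zSi].
have zS : z \notin S by apply: (Kdisj Kcomp SiK SK SiS zSi).
exists z; first by have := inT1 z zT; rewrite /ext (negPf zS).
rewrite dist_trunc // /distinguishes (subsetP sub1 z zT).
case zN2 : (z \in N u2) => //.
have := comp_nb (Kcomp SjK) u2Sj zN2 (compX (Kcomp SiK) zSi).
by rewrite (negPf (Kdisj Kcomp SiK SjK SiSj zSi)).
Qed.

Lemma dirB_main : nctdp_le BS k.
Proof.
exists TB; split; first exact: TB_sub.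
move=> Y1 Y2 Y1B Y2B.
have [u1 [u1C u1S E1 ->]] := TB_spec Y1B; have [u2 [u2C u2S E2 ->]] := TB_spec Y2B.
rewrite -E1 -E2 => neq.
have neq' : N u1 != N u2 by apply: contra neq => /eqP ->.
have [w] := Tncl (imset_f N u1C) (imset_f N u2C) neq'.
rewrite in_setU => /orP [] wT wd; first exact: oneside wT wd.
have wd' : distinguishes w (N u2) (N u1) by rewrite /distinguishes eq_sym.
have [w' w'T w'd] := oneside u2C u1C u2S u1S wT wd'.
by exists w'; rewrite 1?setUC // /distinguishes eq_sym.
Qed.

End DirB.

Lemma reduce (V : finType) (e : rel V) (C X : {set V}) (esym : symmetric e)
  (K : {set {set V}}) (phi : {set V} -> {set V} -> V -> V)
  (Kcomp : {in K, forall S, is_component e X S})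
  (Kiso : {in K &, forall Sa Sb, isoP e C X Sa Sb (phi Sa Sb) (phi Sb Sa)})
  (Kbig : 2 ^ #|X| + 2 <= #|K|) (k : nat) :
  exists2 S, S \in K &
    (nctdp_le [set cnbhd e v | v in C] k <->
     nctdp_le [set cnbhd e v :\: S | v in C :\: S] k).
Proof.
case: (classic (nctdp_le [set cnbhd e v | v in C] k)) => [h|h].
  have [T [Tsub Tncl]] := h.
  have [S SK nsole] := exists_S e Kbig T.
  exists S => //; split => // _.
  exact: (dirB_main esym Kcomp Kiso Kbig Tsub Tncl SK nsole).
have [S SK _] := Kother Kbig set0 set0.
exists S => //; split => // h'; exfalso; apply: h.
exact: (dirA esym Kcomp Kiso Kbig SK h').
Qed.

Section Code.
Variables (V : finType) (e : rel V) (C X : {set V}) (t : nat) (v0 : V).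

Definition CT := ('I_t.+1 * {ffun 'I_t * 'I_t -> bool} * {ffun 'I_t * 'I_#|X| -> bool}
   * {ffun 'I_t -> bool})%type.

Definition code (S : {set V}) : CT :=
  (inord #|S|, [ffun ij : 'I_t * 'I_t => e (nth v0 (enum S) ij.1) (nth v0 (enum S) ij.2)],
   [ffun ij : 'I_t * 'I_#|X| => e (nth v0 (enum X) ij.2) (nth v0 (enum S) ij.1)],
   [ffun i : 'I_t => nth v0 (enum S) i \in C]).

Definition phiC (Sa Sb : {set V}) (s : V) := nth s (enum Sb) (index s (enum Sa)).

Lemma idx_lt (S : {set V}) s : s \in S -> index s (enum S) < #|S|.
Proof. by move=> sS; rewrite cardE index_mem mem_enum. Qed.

Lemma idx_nth (S : {set V}) s : s \in S -> nth v0 (enum S) (index s (enum S)) = s.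
Proof. by move=> sS; rewrite nth_index // mem_enum. Qed.

Lemma code_iso (Sa Sb : {set V}) : #|Sa| <= t -> #|Sb| <= t -> code Sa = code Sb ->
  isoP e C X Sa Sb (phiC Sa Sb) (phiC Sb Sa).
Proof.
move=> ha hb E.
have Ecard : #|Sa| = #|Sb|.
  have := congr1 (fun c : CT => nat_of_ord c.1.1.1) E; rewrite /= !inordK //.
have phiE s : s \in Sa -> phiC Sa Sb s = nth v0 (enum Sb) (index s (enum Sa)).
  move=> sS; rewrite /phiC (set_nth_default v0) // -cardE -Ecard; exact: idx_lt.
have phiS s : s \in Sa -> phiC Sa Sb s \in Sb.
  move=> sS; rewrite phiE // -mem_enum; apply: mem_nth; rewrite -cardE -Ecard.
  exact: idx_lt.
have ord s : s \in Sa -> index s (enum Sa) < t.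
  by move=> sS; apply: leq_trans ha; apply: idx_lt.
split.
- exact: phiS.
- move=> s sS.
  have hi : index s (enum Sa) < size (enum Sb) by rewrite -cardE -Ecard idx_lt.
  by rewrite (phiE s sS) /phiC (index_uniq _ hi (enum_uniq _)) nth_index // mem_enum.
- move=> s s' sS s'S.
  have := congr1 (fun c : CT => c.1.1.2 (Ordinal (ord s sS), Ordinal (ord s' s'S))) E.
  by rewrite /= !ffunE /= !idx_nth // -!phiE // => ->.
- move=> x xX s sS.
  have xi : index x (enum X) < #|X| by apply: idx_lt.
  have := congr1 (fun c : CT => c.1.2 (Ordinal (ord s sS), Ordinal xi)) E.
  by rewrite /= !ffunE /= !idx_nth // -!phiE // => ->.
- move=> s sS.
  have := congr1 (fun c : CT => c.2 (Ordinal (ord s sS))) E.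
  by rewrite /= !ffunE /= !idx_nth // -!phiE // => ->.
Qed.

Lemma card_CT : #|{: CT}| = t.+1 * 2 ^ (t * t) * 2 ^ (t * #|X|) * 2 ^ t.
Proof. by rewrite !card_prod !card_ffun !card_prod !card_ord card_bool. Qed.

Lemma pigeon (A : {set {set V}}) m : #|{: CT}| * m < #|A| ->
  exists c, m < #|[set S in A | code S == c]|.
Proof.
move=> h; case: (boolP [exists c, m < #|[set S in A | code S == c]|]) => [/existsP //|/existsPn hn].
exfalso; move: h; apply/negP; rewrite -leqNgt.
rewrite -sum1_card (partition_big code xpredT) //=.
rewrite -sum_nat_const; apply: leq_sum => c _.
rewrite sum1_card; have := hn c; rewrite -leqNgt => hc; apply: leq_trans hc.
by apply: eq_leq; apply: eq_card => S; rewrite !inE.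
Qed.

End Code.

Lemma arith t p : 0 < t ->
  t.+1 * 2 ^ (t * t) * 2 ^ (t * p) * 2 ^ t * (2 ^ p + 1)
  <= (p + t) * 2 ^ ((p + t) ^ 2) * 2 ^ (2 * t + p + 1).
Proof.
move=> t0.
have h1 : t.+1 <= 2 ^ t by apply: ltn_expl.
have h2 : 2 ^ p + 1 <= 2 ^ (p + 1).
  by rewrite expnD expn1 muln2 -addnn leq_add2l expn_gt0.
apply: leq_trans (_ : 2 ^ t * 2 ^ (t * t) * 2 ^ (t * p) * 2 ^ t * 2 ^ (p + 1) <= _).
  by rewrite !leq_mul.
rewrite -!expnD -mulnA -expnD; apply: leq_trans (leq_pmull _ _); last by lia.
apply: leq_pexp2l => //; rewrite -mulnn; nia.
Qed.

Theorem lemma2 (V : finType) (e : rel V) (C X : {set V}) (A : {set {set V}})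
    (k : nat) :
  simple_graph e ->
  0 < k ->
  (forall S, S \in A -> is_component e X S) ->
  let l := #|A| in
  let t := \max_(S in A) #|S| in
  (#|X| + t) * 2 ^ ((#|X| + t) ^ 2) * 2 ^ (2 * t + #|X| + 1) < l ->
  exists2 S, S \in A &
    (nctdp_le [set cnbhd e v | v in C] k <->
     nctdp_le [set cnbhd e v :\: S | v in C :\: S] k).
Proof.
move=> [esym _] _ Hc l t Hl.
have tA S : S \in A -> #|S| <= t by move=> SA; rewrite /t (bigD1 S) //= leq_maxl.
have : 0 < #|A| by apply: leq_ltn_trans Hl.
rewrite card_gt0 => /set0Pn [S0 S0A].
have [S0ne _ _ _] := Hc _ S0A.
have /set0Pn [v0 _] := S0ne.
have t0 : 0 < t by apply: leq_trans (tA _ S0A); rewrite card_gt0.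
have bound : #|{: CT X t}| * (2 ^ #|X| + 1) < #|A|.
  rewrite card_CT; exact: leq_ltn_trans (arith #|X| t0) Hl.
have [c hc] := pigeon e C v0 bound.
set K := [set S in A | code e C X t v0 S == c] in hc.
have Kbig : 2 ^ #|X| + 2 <= #|K| by move: hc; lia.
have KA S : S \in K -> S \in A by rewrite inE => /andP [].
have Kcomp : {in K, forall S, is_component e X S} by move=> S /KA /Hc.
have Kiso : {in K &, forall Sa Sb, isoP e C X Sa Sb (phiC Sa Sb) (phiC Sb Sa)}.
  move=> Sa Sb; rewrite !inE => /andP [aA /eqP ca] /andP [bA /eqP cb].
  by apply: (@code_iso V e C X t v0 Sa Sb (tA _ aA) (tA _ bA)); rewrite ca cb.
have [S SK H] := reduce esym Kcomp Kiso Kbig k.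
by exists S => //; apply: KA.
Qed.
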